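(* Let $\mathcal{S}:=\{z=(z_1,z_2,z_3,z_{11},z_{12},z_{13},z_{23}): z_{11}=z_1^2,\ z_{ij}=z_iz_j\ (1\le i<j\le3),\ 0\le z_i\le1\ (i=1,2,3)\}$. Then $\mathcal{C}^{\rm SDP+MC+Tri}_3$ is not an extended formulation for $\mathrm{conv}(\mathcal{S})$: the projection of $\mathcal{C}^{\rm SDP+MC+Tri}_3$ onto the coordinates $(x_1,x_2,x_3,Y_{11},Y_{12},Y_{13},Y_{23})$ (identified with $(z_1,z_2,z_3,z_{11},z_{12},z_{13},z_{23})$) is not equal to $\mathrm{conv}(\mathcal{S})$.
   Context: $\mathcal{C}^{\rm SDP}_n$ is the set of $(x,Y)$, $x\in[0,1]^n$, $Y$ symmetric $n\times n$, with $\begin{bmatrix}1&x^\top\\ x&Y\end{bmatrix}\succeq0$ and $Y_{kk}\le x_k$ for all $k$. $\mathcal{C}^{\rm SDP+MC+Tri}_n$ adds, for all $1\le k<l\le n$, $Y_{kl}\ge0$, $Y_{kl}\ge x_k+x_l-1$, $Y_{kl}\le x_k$, $Y_{kl}\le x_l$, and for all $1\le k<l<m\le n$, $Y_{kl}+Y_{km}\le x_k+Y_{lm}$, $Y_{kl}+Y_{lm}\le x_l+Y_{km}$, $Y_{km}+Y_{lm}\le x_m+Y_{kl}$, $x_k+x_l+x_m-Y_{kl}-Y_{km}-Y_{lm}\le1$. *)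

(* Defs.v *)
From HB Require Import structures.
From mathcomp Require Import all_boot all_order all_algebra.
From mathcomp Require Import reals.
Set Implicit Arguments. Unset Strict Implicit. Unset Printing Implicit Defensive.
Import Order.TTheory GRing.Theory Num.Theory.
Local Open Scope ring_scope.

Section Defs.
Variable R : realType.

Definition psd (n : nat) (M : 'M[R]_n) : Prop :=
  forall v : 'cV[R]_n, 0 <= (v^T *m M *m v) 0 0.

Definition liftM (n : nat) (x : 'cV[R]_n) (Y : 'M[R]_n) : 'M[R]_(1 + n) :=
  block_mx 1 x^T x Y.

Definition C_SDP (n : nat) (x : 'cV[R]_n) (Y : 'M[R]_n) : Prop :=
  (forall k, 0 <= x k 0 /\ x k 0 <= 1) /\
  Y^T = Y /\
  psd (liftM x Y) /\
  (forall k, Y k k <= x k 0).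

Definition MC (n : nat) (x : 'cV[R]_n) (Y : 'M[R]_n) : Prop :=
  forall k l : 'I_n, (k < l)%N ->
    0 <= Y k l /\ x k 0 + x l 0 - 1 <= Y k l /\ Y k l <= x k 0 /\ Y k l <= x l 0.

Definition Tri (n : nat) (x : 'cV[R]_n) (Y : 'M[R]_n) : Prop :=
  forall k l m : 'I_n, (k < l)%N -> (l < m)%N ->
    Y k l + Y k m <= x k 0 + Y l m /\
    Y k l + Y l m <= x l 0 + Y k m /\
    Y k m + Y l m <= x m 0 + Y k l /\
    x k 0 + x l 0 + x m 0 - Y k l - Y k m - Y l m <= 1.

Definition C_SDP_MC_Tri (n : nat) (x : 'cV[R]_n) (Y : 'M[R]_n) : Prop :=
  C_SDP x Y /\ MC x Y /\ Tri x Y.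

Definition i0 : 'I_3 := @inord 2 0.
Definition i1 : 'I_3 := @inord 2 1.
Definition i2 : 'I_3 := @inord 2 2.

Definition vec7 (a1 a2 a3 a4 a5 a6 a7 : R) : 'rV[R]_7 :=
  \row_(i < 7) nth 0 [:: a1; a2; a3; a4; a5; a6; a7] i.

Definition projxY (x : 'cV[R]_3) (Y : 'M[R]_3) : 'rV[R]_7 :=
  vec7 (x i0 0) (x i1 0) (x i2 0) (Y i0 i0) (Y i0 i1) (Y i0 i2) (Y i1 i2).

Definition projC3 (z : 'rV[R]_7) : Prop :=
  exists (x : 'cV[R]_3) (Y : 'M[R]_3), C_SDP_MC_Tri x Y /\ z = projxY x Y.

Definition S3 (z : 'rV[R]_7) : Prop :=
  exists z1 z2 z3 : R,
    [/\ 0 <= z1 <= 1, 0 <= z2 <= 1, 0 <= z3 <= 1 &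
        z = vec7 z1 z2 z3 (z1 ^+ 2) (z1 * z2) (z1 * z3) (z2 * z3)].

Definition conv (n : nat) (A : 'rV[R]_n -> Prop) (z : 'rV[R]_n) : Prop :=
  exists (k : nat) (lam : 'I_k -> R) (p : 'I_k -> 'rV[R]_n),
    (forall i, 0 <= lam i) /\ \sum_(i < k) lam i = 1 /\
    (forall i, A (p i)) /\ z = \sum_(i < k) lam i *: p i.

End Defs.

(* Main.v *)
Require Import Defs.
From HB Require Import structures.
From mathcomp Require Import all_boot all_order all_algebra.
From mathcomp Require Import reals.
From mathcomp Require Import ring lra.
Set Implicit Arguments. Unset Strict Implicit. Unset Printing Implicit Defensive.
Import Order.TTheory GRing.Theory Num.Theory.
Local Open Scope ring_scope.

Section Aux.
Variable R : realType.

Definition xx : 'cV[R]_3 := \col_(i < 3) nth 0 [:: 1/4; 1/2; 1/2] i.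
Definition YY : 'M[R]_3 := \matrix_(i < 3, j < 3)
  nth 0 (nth [::] [:: [:: 3/16; 1/4; 1/4]; [:: 1/4; 1/2; 1/4]; [:: 1/4; 1/4; 1/2]] i) j.

Definition cc : 'I_7 -> R := fun j => nth 0 [:: 2; 0; 0; 1; -2; -2; 1] j.
Definition LL (w : 'rV[R]_7) : R := \sum_(j < 7) cc j * w 0 j.

Lemma LL_vec7 a1 a2 a3 a4 a5 a6 a7 :
  LL (vec7 a1 a2 a3 a4 a5 a6 a7) = 2 * a1 + a4 - 2 * a5 - 2 * a6 + a7.
Proof.
rewrite /LL !big_ord_recr big_ord0 /= !mxE /cc /=. ring.
Qed.

Lemma LL_S3 w : S3 w -> 0 <= LL w.
Proof.
case=> [z1 [z2 [z3 [/andP[h1 h1'] /andP[h2 h2'] /andP[h3 h3'] ->]]]].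
rewrite LL_vec7.
have -> : 2 * z1 + z1 ^+ 2 - 2 * (z1 * z2) - 2 * (z1 * z3) + z2 * z3 =
  (1 - z2) * (1 - z3) * (z1 ^+ 2 + 2 * z1) + z2 * (1 - z3) * z1 ^+ 2
  + (1 - z2) * z3 * z1 ^+ 2 + z2 * z3 * (1 - z1) ^+ 2 by ring.
have a2 : 0 <= 1 - z2 by lra.
have a3 : 0 <= 1 - z3 by lra.
have q1 : 0 <= z1 ^+ 2 + 2 * z1 by rewrite addr_ge0 ?sqr_ge0 ?mulr_ge0.
have t1 := mulr_ge0 (mulr_ge0 a2 a3) q1.
have t2 := mulr_ge0 (mulr_ge0 h2 a3) (sqr_ge0 z1).
have t3 := mulr_ge0 (mulr_ge0 a2 h3) (sqr_ge0 z1).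
have t4 := mulr_ge0 (mulr_ge0 h2 h3) (sqr_ge0 (1 - z1)).
lra.
Qed.

Lemma LL_sum k (lam : 'I_k -> R) (p : 'I_k -> 'rV[R]_7) :
  LL (\sum_(i < k) lam i *: p i) = \sum_(i < k) lam i * LL (p i).
Proof.
rewrite /LL.
under eq_bigr => j _ do rewrite summxE mulr_sumr.
rewrite exchange_big /=; apply: eq_bigr => i _.
rewrite mulr_sumr; apply: eq_bigr => j _; rewrite mxE; ring.
Qed.

Lemma LL_z : LL (projxY xx YY) = - (1/16).
Proof.
rewrite /projxY LL_vec7 /xx /YY !mxE /i0 /i1 /i2 /=.
rewrite !inordK //=. lra.
Qed.


Lemma psd_ok : psd (liftM xx YY).
Proof.
move=> v.
rewrite -mulmxA mxE big_split_ord /= !big_ord_recr !big_ord0 /= !mxE.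
rewrite !big_split_ord /= !big_ord_recr !big_ord0 /=.
rewrite /liftM !(block_mxEul, block_mxEur, block_mxEdl, block_mxEdr) /xx /YY !mxE /=.
set a := v (lshift 3 ord_max) 0.
set b := v (rshift 1 (widen_ord (leqnSn 2) (widen_ord (leqnSn 1) ord_max))) 0.
set c := v (rshift 1 (widen_ord (leqnSn 2) ord_max)) 0.
set d := v (rshift 1 ord_max) 0.
have s1 := sqr_ge0 (a - b / 4).
have s2 := sqr_ge0 (a + b / 4 + c).
have s3 := sqr_ge0 (a + b / 4 + d).
have s4 := sqr_ge0 (a + 3 * b / 4 + c + d).
nra.
Qed.


Lemma C_ok : C_SDP_MC_Tri xx YY.
Proof.
split; [|split].
- split; [|split; [|split]].
  + by case=> [[|[|[|k]]] Hk] //; rewrite /xx !mxE /=; lra.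
  + by apply/matrixP => i j; rewrite !mxE;
      case: i => [[|[|[|i]]] Hi] //; case: j => [[|[|[|j]]] Hj].
  + exact: psd_ok.
  + by case=> [[|[|[|k]]] Hk] //; rewrite /xx /YY !mxE /=; lra.
- by case=> [[|[|[|k]]] Hk] //; case=> [[|[|[|l]]] Hl] //= _;
    rewrite /xx /YY !mxE /=; lra.
- by case=> [[|[|[|k]]] Hk] //; case=> [[|[|[|l]]] Hl] //;
    case=> [[|[|[|m]]] Hm] //= _ _; rewrite /xx /YY !mxE /=; lra.
Qed.

End Aux.

Theorem corollary2 (R : realType) :
  ~ (forall z : 'rV[R]_7, projC3 z <-> conv (@S3 R) z).
Proof.
move=> H.
have [k [lam [p [hl [hs [hp hz]]]]]] :
  conv (@S3 R) (projxY (xx R) (YY R)).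
  by apply/H; exists (xx R), (YY R); split => //; exact: C_ok.
have := LL_z R; rewrite hz LL_sum => E.
have : 0 <= \sum_(i < k) lam i * LL (p i).
  by apply: sumr_ge0 => i _; apply: mulr_ge0 => //; apply: LL_S3.
rewrite E; lra.
Qed.
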